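(* Let $K$ be an algebraically closed field, $m\ge1$ and $2\le a\le b$ integers, $S=K[[x,y_1,\dots,y_m]]$, $g=g(y_1,\dots,y_m)\in(\underline{y})^b\setminus(\underline{y})^{b+1}$, $A=S/(x^a-g)$, $Q=(y_1,\dots,y_m)A$, and $n_k=\lfloor kb/a\rfloor$. Then (a) for all integers $k,n\ge1$, $x^k\in\overline{Q^n}$ if and only if $n\le n_k$; (b) for each $n\ge1$, $Q^n\subseteq J_n\subseteq\overline{Q^n}$, i.e. $\overline{J_n}=\overline{Q^n}$, where $J_n=Q^n+xQ^{n-n_1}+x^2Q^{n-n_2}+\cdots+x^{a-1}Q^{n-n_{a-1}}$.
   Context: $(\underline{y})=(y_1,\dots,y_m)$; $\overline{J}$ denotes the integral closure of an ideal $J$; by convention $Q^j=A$ for $j\le0$. *)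

(* Defs.v *)
(* Formal power series ring S = K[[x, y_1, ..., y_m]] given
   concretely as coefficient functions on monomials, with explicit ring
   operations; ideals given by finite generator lists; the quotient
   A = S/(x^a - g) handled through lifts to S. *)
From HB Require Import structures.
From mathcomp Require Import all_boot all_order all_algebra.
Set Implicit Arguments. Unset Strict Implicit. Unset Printing Implicit Defensive.
Import Order.TTheory GRing.Theory Num.Theory.
Local Open Scope ring_scope.

Section PowerSeries.
Variables (K : fieldType) (m : nat).

(* monomials in the m+1 variables x = index ord0, y_j = index (lift ord0 j) *)
Definition mon := {ffun 'I_m.+1 -> nat}.
Definition mdeg (mu : mon) : nat := (\sum_(i < m.+1) mu i)%N.

Definition ser := mon -> K.

Definition zeroS : ser := fun _ => 0.
Definition oneS : ser := fun mu => (mu == [ffun => 0%N])%:R.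
Definition addS (f h : ser) : ser := fun mu => f mu + h mu.
Definition subS (f h : ser) : ser := fun mu => f mu - h mu.
Definition mulS (f h : ser) : ser := fun mu =>
  \sum_(nu : {ffun 'I_m.+1 -> 'I_(mdeg mu).+1} | [forall i, (nu i <= mu i)%N])
     f [ffun i => (nu i : nat)] * h [ffun i => (mu i - nu i)%N].
Definition expS (f : ser) (k : nat) : ser := iter k (mulS f) oneS.
Definition sumS (l : seq ser) : ser := foldr addS zeroS l.

Definition varS (i : 'I_m.+1) : ser :=
  fun mu => (mu == [ffun j => ((j == i) : nat)])%:R.
Definition xS : ser := varS ord0.
Definition ysS : seq ser := [seq varS (lift ord0 j) | j <- enum 'I_m].

Definition inIdeal (gs : seq ser) (f : ser) : Prop :=
  exists cs : seq ser, size cs = size gs /\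
    forall mu, f mu = sumS [seq mulS c.1 c.2 | c <- zip cs gs] mu.

Fixpoint powgens (gs : seq ser) (n : nat) : seq ser :=
  if n is n'.+1 then [seq mulS p q | p <- gs, q <- powgens gs n'] else [:: oneS].

(* Working in A = S/(F): an element of A is represented by a lift in S; the
   ideal of A generated by (the images of) gs contains (the image of) f iff
   f lies in the ideal of S generated by gs and F. *)
Definition inIdealA (F : ser) (gs : seq ser) (f : ser) : Prop :=
  inIdeal (rcons gs F) f.

Definition inIntClA (F : ser) (gs : seq ser) (r : ser) : Prop :=
  exists d : nat, (0 < d)%N /\ exists cs : seq ser, size cs = d /\
    (forall i, (i < d)%N -> inIdealA F (powgens gs i.+1) (nth zeroS cs i)) /\
    inIdealA F [::] (addS (expS r d)
       (sumS [seq mulS (nth zeroS cs i) (expS r (d - i.+1)) | i <- iota 0 d])).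

End PowerSeries.

Arguments xS : clear implicits.
Arguments zeroS : clear implicits.
Arguments oneS : clear implicits.
Arguments ysS : clear implicits.

Definition nk (a b k : nat) : nat := (k * b %/ a)%N.

(* generators of J_n = Q^n + x Q^(n-n_1) + ... + x^(a-1) Q^(n-n_(a-1));
   truncated subtraction implements the convention Q^j = A for j <= 0 *)
Definition Jgens (K : fieldType) (m a b n : nat) : seq (ser K m) :=
  powgens (ysS K m) n ++
  flatten [seq [seq mulS (expS (xS K m) i) q | q <- powgens (ysS K m) (n - nk a b i)]
          | i <- iota 1 a.-1].

(* Main.v *)
From HB Require Import structures.
Require Import Defs.
From mathcomp Require Import all_boot all_order all_algebra.
From mathcomp Require Import boolp.
From Stdlib Require Import Classical_Prop.
From mathcomp Require Import zify ring.
From mathcomp Require Import fingroup perm.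
Set Implicit Arguments. Unset Strict Implicit. Unset Printing Implicit Defensive.
Import Order.TTheory GRing.Theory Num.Theory.
Local Open Scope ring_scope.

Section Mon.
Variable m : nat.
Local Notation Mn := (Defs.mon m).
Definition madd (u v : Mn) : Mn := [ffun i => (u i + v i)%N].
Definition msub (u v : Mn) : Mn := [ffun i => (u i - v i)%N].
Definition mle (u v : Mn) : bool := [forall i, (u i <= v i)%N].
Definition m0 : Mn := [ffun => 0%N].

Lemma mleP (u v : Mn) : reflect (forall i, u i <= v i)%N (mle u v).
Proof. exact: forallP. Qed.

Lemma mle_mdeg (u : Mn) i : (u i <= mdeg u)%N.
Proof. by rewrite /mdeg (bigD1 i) //= leq_addr. Qed.

Definition Lm (mu : Mn) : seq Mn :=
  map (fun nu : {ffun 'I_m.+1 -> 'I_(mdeg mu).+1} => ([ffun i => (nu i : nat)] : Mn))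
    (enum [pred nu : {ffun 'I_m.+1 -> 'I_(mdeg mu).+1} | [forall i, (nu i <= mu i)%N]]).

Lemma mem_Lm mu nu : (nu \in Lm mu) = mle nu mu.
Proof.
apply/idP/idP.
  case/mapP => nu' ; rewrite mem_enum inE => /forallP H ->.
  by apply/mleP => i; rewrite ffunE.
move/mleP => H; apply/mapP.
have Hb i : (nu i < (mdeg mu).+1)%N by rewrite ltnS (leq_trans (H i)) // mle_mdeg.
exists [ffun i => Ordinal (Hb i)].
  by rewrite mem_enum inE; apply/forallP => i; rewrite ffunE /=.
by apply/ffunP => i; rewrite !ffunE.
Qed.

Lemma uniq_Lm mu : uniq (Lm mu).
Proof.
rewrite map_inj_uniq ?enum_uniq // => u v /ffunP E; apply/ffunP => i.
by apply/val_inj; have := E i; rewrite !ffunE.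
Qed.

Lemma msubK u v : mle v u -> madd v (msub u v) = u.
Proof. by move/mleP => H; apply/ffunP => i; rewrite !ffunE subnKC. Qed.
Lemma maddK u v : msub (madd u v) u = v.
Proof. by apply/ffunP => i; rewrite !ffunE addKn. Qed.
Lemma mle_sub u v : mle (msub u v) u.
Proof. by apply/mleP => i; rewrite ffunE leq_subr. Qed.
Lemma msub_sub u v : mle v u -> msub u (msub u v) = v.
Proof. by move/mleP => H; apply/ffunP => i; rewrite !ffunE subKn. Qed.
Lemma mle_add u v : mle u (madd u v).
Proof. by apply/mleP => i; rewrite ffunE leq_addr. Qed.
Lemma mle_trans u v w : mle u v -> mle v w -> mle u w.
Proof. by move=> /mleP H1 /mleP H2; apply/mleP => i; apply: leq_trans (H1 i) (H2 i). Qed.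
Lemma maddC u v : madd u v = madd v u.
Proof. by apply/ffunP => i; rewrite !ffunE addnC. Qed.
Lemma madd0 u : madd u m0 = u.
Proof. by apply/ffunP => i; rewrite !ffunE addn0. Qed.
Lemma msub0 u : msub u m0 = u.
Proof. by apply/ffunP => i; rewrite !ffunE subn0. Qed.
Lemma msubsub u v w : msub (msub u v) w = msub u (madd v w).
Proof. by apply/ffunP => i; rewrite !ffunE subnDA. Qed.
Lemma mle0 u : mle m0 u.
Proof. by apply/mleP => i; rewrite ffunE. Qed.

End Mon.

Section Ring.
Variables (K : fieldType) (m : nat).
Local Notation Mn := (Defs.mon m).
Local Notation Sr := (Defs.ser K m).

Lemma mulSE (f h : Sr) mu : mulS f h mu = \sum_(nu <- Lm mu) f nu * h (msub mu nu).
Proof.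
rewrite /mulS /Lm big_map big_enum /=; apply: eq_bigr => nu _.
by congr (_ * h _); apply/ffunP => i; rewrite !ffunE.
Qed.

Lemma sum_Lm mu (s : seq Mn) (F : Mn -> K) : uniq s ->
  (forall nu, (nu \in s) = mle nu mu) -> \sum_(nu <- s) F nu = \sum_(nu <- Lm mu) F nu.
Proof.
move=> Us Hs; apply: perm_big; apply: uniq_perm => // [|nu]; first exact: uniq_Lm.
by rewrite Hs mem_Lm.
Qed.

Lemma mulSC (f h : Sr) : mulS f h = mulS h f.
Proof.
apply: funext => mu; rewrite !mulSE.
rewrite -(@sum_Lm mu [seq msub mu nu | nu <- Lm mu] (fun nu => h nu * f (msub mu nu))); last first.
- move=> nu; apply/mapP/idP => [[nu' _ ->]|H]; first exact: mle_sub.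
  by exists (msub mu nu); rewrite ?mem_Lm ?mle_sub ?msub_sub.
- rewrite map_inj_in_uniq ?uniq_Lm // => u v; rewrite !mem_Lm => Hu Hv E.
  by rewrite -(msub_sub Hu) E msub_sub.
rewrite [RHS]big_map big_seq_cond [RHS]big_seq_cond; apply: eq_bigr => nu.
by rewrite andbT mem_Lm => H; rewrite msub_sub // mulrC.
Qed.

Lemma mulSDr (f h k : Sr) : mulS f (addS h k) = addS (mulS f h) (mulS f k).
Proof. by apply: funext => mu; rewrite /addS !mulSE -big_split; apply: eq_bigr => nu _; rewrite mulrDr. Qed.

Lemma mul1S (f : Sr) : mulS (oneS K m) f = f.
Proof.
apply: funext => mu; rewrite mulSE (bigD1_seq (m0 m)) ?uniq_Lm ?mem_Lm ?mle0 //=.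
rewrite /oneS eqxx mul1r msub0 big1_seq ?addr0 // => nu /andP[H _].
by rewrite /m0 (negPf H) mul0r.
Qed.

Lemma sum_Lm_le mu rho (F : Mn -> K) : mle rho mu ->
  \sum_(nu <- Lm rho) F nu = \sum_(nu <- Lm mu | mle nu rho) F nu.
Proof.
move=> Hr; rewrite -[RHS]big_filter; symmetry; apply: sum_Lm.
  by apply: filter_uniq; apply: uniq_Lm.
move=> nu; rewrite mem_filter mem_Lm; apply/andP/idP => [[]//|H]; split => //.
exact: mle_trans Hr.
Qed.

Lemma sum_Lm_shift mu nu (F : Mn -> K) : mle nu mu ->
  \sum_(tau <- Lm (msub mu nu)) F tau = \sum_(rho <- Lm mu | mle nu rho) F (msub rho nu).
Proof.
move=> Hn.
transitivity (\sum_(tau <- [seq msub rho nu | rho <- [seq rho <- Lm mu | mle nu rho]]) F tau); last by rewrite big_map big_filter.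
symmetry; apply: sum_Lm.
- rewrite map_inj_in_uniq ?filter_uniq ?uniq_Lm // => u v.
  rewrite !mem_filter => /andP[Hu _] /andP[Hv _] E.
  by rewrite -(msubK Hu) E msubK.
move=> tau; apply/mapP/idP.
  case=> rho; rewrite mem_filter mem_Lm => /andP[H1 H2] ->.
  by apply/mleP => i; move: H1 H2 => /mleP H1 /mleP H2; rewrite !ffunE leq_sub2r.
move=> H; exists (madd nu tau); last by rewrite maddK.
rewrite mem_filter mem_Lm mle_add /=; apply/mleP => i; move/mleP: H => H.
by have := H i; move/mleP: Hn => /(_ i); rewrite !ffunE => H1 H2; rewrite -(subnKC H1) leq_add2l.
Qed.

Lemma mulSA (f h k : Sr) : mulS f (mulS h k) = mulS (mulS f h) k.
Proof.
apply: funext => mu; rewrite !mulSE.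
transitivity (\sum_(nu <- Lm mu) \sum_(rho <- Lm mu | mle nu rho) f nu * h (msub rho nu) * k (msub mu rho)).
  rewrite big_seq_cond [RHS]big_seq_cond; apply: eq_bigr => nu; rewrite andbT mem_Lm => Hn.
  rewrite mulSE mulr_sumr sum_Lm_shift //; apply: eq_bigr => rho Hr.
  by rewrite mulrA msubsub msubK.
transitivity (\sum_(rho <- Lm mu) \sum_(nu <- Lm mu | mle nu rho) f nu * h (msub rho nu) * k (msub mu rho)).
  rewrite (eq_bigr (fun nu => \sum_(rho <- Lm mu) (if mle nu rho then f nu * h (msub rho nu) * k (msub mu rho) else 0))); last by move=> nu _; rewrite big_mkcond.
  rewrite exchange_big; apply: eq_bigr => rho _; rewrite [RHS]big_mkcond //.
rewrite big_seq_cond [RHS]big_seq_cond; apply: eq_bigr => rho; rewrite andbT mem_Lm => Hr.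
by rewrite mulSE mulr_suml (sum_Lm_le _ Hr).
Qed.

End Ring.

Definition oppS (K : fieldType) m (f : ser K m) : ser K m := fun mu => - f mu.

HB.instance Definition _ (K : fieldType) m := Choice.copy (ser K m) (mon m -> K).

Section Inst.
Variables (K : fieldType) (m : nat).
Local Notation Sr := (ser K m).
Lemma addSA : associative (@addS K m).
Proof. by move=> f g h; apply: funext => mu; rewrite /addS addrA. Qed.
Lemma addSC : commutative (@addS K m).
Proof. by move=> f g; apply: funext => mu; rewrite /addS addrC. Qed.
Lemma add0S : left_id (zeroS K m) (@addS K m).
Proof. by move=> f; apply: funext => mu; rewrite /addS /zeroS add0r. Qed.
Lemma addNS : left_inverse (zeroS K m) (@oppS K m) (@addS K m).
Proof. by move=> f; apply: funext => mu; rewrite /addS /oppS /zeroS addNr. Qed.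
End Inst.

HB.instance Definition _ (K : fieldType) m :=
  GRing.isZmodule.Build (ser K m) (@addSA K m) (@addSC K m) (@add0S K m) (@addNS K m).

Section Inst2.
Variables (K : fieldType) (m : nat).
Lemma mulSDl : left_distributive (@mulS K m) (@addS K m).
Proof. by move=> f g h; rewrite mulSC mulSDr !(mulSC h). Qed.
Lemma oneS_neq0 : oneS K m != zeroS K m.
Proof.
apply/eqP => /(congr1 (fun f => f (m0 m))); rewrite /oneS /zeroS eqxx /=.
by move/eqP; rewrite oner_eq0.
Qed.
End Inst2.

HB.instance Definition _ (K : fieldType) m :=
  GRing.Zmodule_isComNzRing.Build (ser K m) (@mulSA K m) (@mulSC K m) (@mul1S K m)
    (@mulSDl K m) (@oneS_neq0 K m).

Section Test.
Variables (K : fieldType) (m : nat).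
Lemma mulE (f g : ser K m) : f * g = mulS f g. Proof. by []. Qed.
Lemma addE (f g : ser K m) : f + g = addS f g. Proof. by []. Qed.
Lemma subE (f g : ser K m) : f - g = subS f g. Proof. by []. Qed.
Lemma oneE : 1 = oneS K m. Proof. by []. Qed.
Lemma zeroE : 0 = zeroS K m. Proof. by []. Qed.
Lemma expE (f : ser K m) k : expS f k = f ^+ k.
Proof. elim: k => [|k IH] //; rewrite exprS -IH. by []. Qed.
Lemma sumE (l : seq (ser K m)) : sumS l = \sum_(x <- l) x.
Proof. elim: l => [|x l IH]; first by rewrite big_nil. by rewrite big_cons -IH. Qed.
End Test.

Section Coef.
Variables (K : fieldType) (m : nat).
Local Notation Mn := (Defs.mon m).
Local Notation Sr := (Defs.ser K m).
Implicit Types (f g h : Sr) (mu nu : Mn).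

Lemma scD f g mu : (f + g) mu = f mu + g mu. Proof. by []. Qed.
Lemma scN f mu : (- f) mu = - f mu. Proof. by []. Qed.
Lemma scB f g mu : (f - g) mu = f mu - g mu. Proof. by []. Qed.
Lemma sc0 mu : (0 : Sr) mu = 0. Proof. by []. Qed.
Lemma sc_sum (I : Type) (r : seq I) (P : pred I) (F : I -> Sr) mu :
  (\sum_(i <- r | P i) F i) mu = \sum_(i <- r | P i) F i mu.
Proof. by apply: (big_morph (fun f : Sr => f mu)). Qed.
Lemma scM f g mu : (f * g) mu = \sum_(nu <- Lm mu) f nu * g (msub mu nu).
Proof. exact: mulSE. Qed.

Definition monoS nu : Sr := fun mu => (mu == nu)%:R.
Definition unitm (i : 'I_m.+1) : Mn := [ffun j => ((j == i) : nat)].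
Definition mscale (j : nat) (u : Mn) : Mn := [ffun i => (j * u i)%N].

Lemma oneE1 : (1 : Sr) = monoS (m0 m). Proof. by []. Qed.
Lemma varE i : @varS K m i = monoS (unitm i). Proof. by []. Qed.

Lemma mulmonoE nu g mu : (monoS nu * g) mu = if mle nu mu then g (msub mu nu) else 0.
Proof.
rewrite scM; case: ifP => H.
  rewrite (bigD1_seq nu) ?mem_Lm ?uniq_Lm //= /monoS eqxx mul1r big1 ?addr0 //.
  by move=> nu' /negPf ->; rewrite mul0r.
rewrite big1_seq // => nu'; rewrite mem_Lm /monoS => H'.
by case: eqP H' => [->|]; rewrite ?H // mul0r.
Qed.

Lemma monoM u v : monoS u * monoS v = monoS (madd u v).
Proof.
apply: funext => mu; rewrite mulmonoE /monoS; case: ifP => H.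
  suff -> : (msub mu u == v) = (mu == madd u v) by [].
  apply/idP/idP => /eqP E.
    by apply/eqP; rewrite -E msubK.
  by apply/eqP; rewrite E maddK.
case: eqP => // E; move: H; rewrite E mle_add //.
Qed.

Lemma monoX u j : monoS u ^+ j = monoS (mscale j u).
Proof.
elim: j => [|j IH].
  by rewrite expr0; congr monoS; apply/ffunP => i; rewrite !ffunE.
rewrite exprS IH monoM; congr monoS; apply/ffunP => i; rewrite !ffunE mulSn.
by [].
Qed.

Definition ordge (delta : Mn -> nat) (N : int) f := forall mu, f mu != 0 -> N <= (delta mu)%:Z.

Section Ord.
Variable delta : Mn -> nat.
Hypothesis dadd : forall u v, delta (madd u v) = (delta u + delta v)%N.

Lemma ordge0 N : ordge delta N 0. Proof. by move=> mu; rewrite sc0 eqxx. Qed.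
Lemma ordgeD N f g : ordge delta N f -> ordge delta N g -> ordge delta N (f + g).
Proof.
move=> Hf Hg mu; rewrite scD; case: (f mu =P 0) => [->|/eqP]; first by rewrite add0r; apply: Hg.
by move=> H _; apply: Hf.
Qed.
Lemma ordgeN N f : ordge delta N f -> ordge delta N (- f).
Proof. by move=> Hf mu; rewrite scN oppr_eq0; apply: Hf. Qed.
Lemma ordge_sum (I : Type) (r : seq I) (P : pred I) (F : I -> Sr) N :
  (forall i, P i -> ordge delta N (F i)) -> ordge delta N (\sum_(i <- r | P i) F i).
Proof.
move=> H; elim/big_rec: _ => [|i x Pi Hx]; first exact: ordge0.
exact: ordgeD (H _ Pi) Hx.
Qed.
Lemma ordge_le N N' f : N' <= N -> ordge delta N f -> ordge delta N' f.
Proof. by move=> HN Hf mu /Hf; apply: le_trans. Qed.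
Lemma ordge_triv N f : N <= 0 -> ordge delta N f.
Proof. by move=> HN mu _; apply: le_trans HN _. Qed.
Lemma ordgeM N1 N2 f g : ordge delta N1 f -> ordge delta N2 g -> ordge delta (N1 + N2) (f * g).
Proof.
move=> Hf Hg mu; rewrite scM => Hs.
have [nu Hnu Hne] : exists2 nu, nu \in Lm mu & f nu * g (msub mu nu) != 0.
  apply/hasP; apply: contraNT Hs => /hasPn H; rewrite big1_seq // => nu /H.
  by rewrite negbK => /eqP.
have /Hf Hf1 : f nu != 0 by apply: contraNneq Hne => ->; rewrite mul0r.
have /Hg Hg1 : g (msub mu nu) != 0 by apply: contraNneq Hne => ->; rewrite mulr0.
move: Hnu; rewrite mem_Lm => /msubK E.
by rewrite -E dadd PoszD lerD.
Qed.

Lemma ordge_mono nu : ordge delta (delta nu) (monoS nu).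
Proof. by move=> mu; rewrite /monoS; case: (mu =P nu) => [->|_] //; rewrite eqxx. Qed.

Lemma ordgeX N f j : ordge delta N f -> ordge delta (N * j%:Z) (f ^+ j).
Proof.
move=> Hf; elim: j => [|j IH].
  by rewrite mulr0; apply: ordge_triv.
by rewrite exprS -addn1 PoszD mulrDr mulr1 addrC; apply: ordgeM.
Qed.
End Ord.
End Coef.

Section Ideal.
Variables (K : fieldType) (m : nat).
Local Notation Mn := (Defs.mon m).
Local Notation Sr := (Defs.ser K m).
Implicit Types (f g h p q z : Sr) (mu nu : Mn) (gs G : seq Sr).

Lemma inI_nil f : inIdeal [::] f <-> f = 0.
Proof.
split => [[cs [/size0nil -> H]]|->]; first by apply: funext => mu; rewrite H.
by exists [::]; split.
Qed.

Lemma inI_cons x gs f : inIdeal (x :: gs) f <-> exists c g, inIdeal gs g /\ f = c * x + g.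
Proof.
split.
  case=> [[|c cs] [//= [Hs] H]].
  exists c, (sumS [seq mulS c.1 c.2 | c <- zip cs gs]); split.
    by exists cs; split.
  by apply: funext => mu; rewrite H.
case=> c [g [[cs [Hs H]] ->]]; exists (c :: cs); split; first by rewrite /= Hs.
by move=> mu /=; rewrite /addS -H.
Qed.

Lemma inI_ind gs (P : Sr -> Prop) : P 0 -> (forall f g, P f -> P g -> P (f + g)) ->
  (forall h f, P f -> P (h * f)) -> (forall q, q \in gs -> P q) ->
  forall f, inIdeal gs f -> P f.
Proof.
move=> P0 PD PM; elim: gs => [|x gs IH] Pg f.
  by move/inI_nil ->.
case/inI_cons => c [g [Hg ->]]; apply: PD.
  by apply: PM; apply: Pg; rewrite mem_head.
by apply: IH Hg => q Hq; apply: Pg; rewrite in_cons Hq orbT.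
Qed.

Lemma inI0 gs : inIdeal gs 0.
Proof.
elim: gs => [|x gs IH]; first by apply/inI_nil.
by apply/inI_cons; exists 0, 0; split => //; rewrite mul0r addr0.
Qed.

Lemma inID gs f g : inIdeal gs f -> inIdeal gs g -> inIdeal gs (f + g).
Proof.
elim: gs f g => [|x gs IH] f g.
  by move=> /inI_nil -> /inI_nil ->; apply/inI_nil; rewrite addr0.
move=> /inI_cons [c1 [g1 [H1 ->]]] /inI_cons [c2 [g2 [H2 ->]]].
apply/inI_cons; exists (c1 + c2), (g1 + g2); split; first exact: IH.
by rewrite mulrDl -!addrA; congr (_ + _); rewrite addrCA.
Qed.

Lemma inIM gs h f : inIdeal gs f -> inIdeal gs (h * f).
Proof.
elim: gs f => [|x gs IH] f.
  by move=> /inI_nil ->; apply/inI_nil; rewrite mulr0.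
move=> /inI_cons [c [g [H ->]]]; apply/inI_cons; exists (h * c), (h * g); split.
  exact: IH.
by rewrite mulrDr mulrA.
Qed.

Lemma inIN gs f : inIdeal gs f -> inIdeal gs (- f).
Proof. by move=> H; rewrite -mulN1r; apply: inIM. Qed.

Lemma inI_mem gs q : q \in gs -> inIdeal gs q.
Proof.
elim: gs => [//|x gs IH]; rewrite in_cons => /orP [/eqP ->|H]; apply/inI_cons.
  by exists 1, 0; split; [exact: inI0|rewrite mul1r addr0].
by exists 0, q; split; [exact: IH|rewrite mul0r add0r].
Qed.

Lemma inI_sub gs1 gs2 f : (forall q, q \in gs1 -> inIdeal gs2 q) -> inIdeal gs1 f -> inIdeal gs2 f.
Proof.
move=> H; apply: inI_ind => //; [exact: inI0|exact: inID|exact: inIM].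
Qed.

Lemma inI_sum gs (I : Type) (r : seq I) (P : pred I) (F : I -> Sr) :
  (forall i, P i -> inIdeal gs (F i)) -> inIdeal gs (\sum_(i <- r | P i) F i).
Proof.
move=> H; apply: (big_ind (inIdeal gs)) => //; [exact: inI0|exact: inID].
Qed.

Lemma inI_cat gs1 gs2 f : inIdeal (gs1 ++ gs2) f ->
  exists u v, [/\ inIdeal gs1 u, inIdeal gs2 v & f = u + v].
Proof.
apply: (@inI_ind _ (fun f => exists u v, [/\ inIdeal gs1 u, inIdeal gs2 v & f = u + v])).
- by exists 0, 0; split; [exact: inI0|exact: inI0|rewrite addr0].
- move=> f1 f2 [u1 [v1 [H1 H2 ->]]] [u2 [v2 [H3 H4 ->]]].
  exists (u1 + u2), (v1 + v2); split; [exact: inID|exact: inID|].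
  by rewrite -!addrA; congr (_ + _); rewrite addrCA.
- move=> h f1 [u [v [H1 H2 ->]]]; exists (h * u), (h * v); split; [exact: inIM|exact: inIM|].
  by rewrite mulrDr.
- move=> q; rewrite mem_cat => /orP [H|H].
    by exists q, 0; split; [exact: inI_mem|exact: inI0|rewrite addr0].
  by exists 0, q; split; [exact: inI0|exact: inI_mem|rewrite add0r].
Qed.

Lemma inIA_dec gs F f : inIdealA F gs f -> exists u h, inIdeal gs u /\ f = u + h * F.
Proof.
rewrite /inIdealA -cats1 => /inI_cat [u [v [Hu Hv ->]]].
move/inI_cons: Hv => [c [g [/inI_nil -> ->]]].
by exists u, c; split; rewrite ?addr0.
Qed.

Lemma inIA_intro gs F u h : inIdeal gs u -> inIdealA F gs (u + h * F).
Proof.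
move=> Hu; apply: inID.
  by apply: inI_sub Hu => q Hq; apply: inI_mem; rewrite mem_rcons in_cons Hq orbT.
by apply: inIM; apply: inI_mem; rewrite mem_rcons mem_head.
Qed.

Lemma powgensS_mem G j p q : p \in G -> q \in powgens G j -> p * q \in powgens G j.+1.
Proof. by move=> Hp Hq; apply: allpairs_f. Qed.

Lemma powgensS_inv G j z : z \in powgens G j.+1 ->
  exists p q, [/\ p \in G, q \in powgens G j & z = p * q].
Proof. by case/allpairsP => [[p q] [/= Hp Hq ->]]; exists p, q. Qed.

Lemma powgens0 G : powgens G 0 = [:: 1]. Proof. by []. Qed.

Section OrdI.
Variable delta : Mn -> nat.
Hypothesis dadd : forall u v, delta (madd u v) = (delta u + delta v)%N.

Lemma ordge_powgens G (N : int) j : (forall p, p \in G -> ordge delta N p) ->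
  forall q, q \in powgens G j -> ordge delta (N * j%:Z) q.
Proof.
move=> HG; elim: j => [|j IH] q.
  by move=> _; apply: ordge_triv; rewrite mulr0.
case/powgensS_inv => [p [r [Hp Hr ->]]].
rewrite -addn1 PoszD mulrDr mulr1 addrC; apply: ordgeM => //; [exact: HG|exact: IH].
Qed.

Lemma inI_ordge gs (N : int) f : (forall q, q \in gs -> ordge delta N q) ->
  inIdeal gs f -> ordge delta N f.
Proof.
move=> H; apply: inI_ind => //; [exact: ordge0|exact: ordgeD|].
by move=> h f1 Hf; rewrite -[N]add0r; apply: ordgeM => //; apply: ordge_triv.
Qed.
End OrdI.

End Ideal.

Definition ydeg m (mu : mon m) : nat := (\sum_(i < m.+1 | i != ord0) mu i)%N.
Arguments ydeg {m} mu.

Section Ydeg.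
Variables (K : fieldType) (m : nat).
Local Notation Mn := (Defs.mon m).
Local Notation Sr := (Defs.ser K m).
Implicit Types (f g h p q z : Sr) (mu nu : Mn) (gs G : seq Sr).

Lemma ydeg_add (u v : Mn) : ydeg (madd u v) = (ydeg u + ydeg v)%N.
Proof. by rewrite /ydeg -big_split /=; apply: eq_bigr => i _; rewrite ffunE. Qed.

Lemma ydeg_unit (j : 'I_m) : ydeg (unitm (lift ord0 j)) = 1%N.
Proof.
rewrite /ydeg (bigD1 (lift ord0 j)) ?neq_lift //= ffunE eqxx big1 // => i /andP[_ H].
by rewrite ffunE (negPf H).
Qed.

Lemma mle_unit (i : 'I_m.+1) mu : mle (unitm i) mu = (0 < mu i)%N.
Proof.
apply/mleP/idP => [/(_ i)|H k]; first by rewrite ffunE eqxx.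
by rewrite ffunE; case: eqP => [->|]. 
Qed.

Lemma ys_ordge q : q \in ysS K m -> ordge ydeg 1 q.
Proof.
case/mapP => j _ ->; rewrite varE; have := @ordge_mono K m ydeg (unitm (lift ord0 j)); by rewrite ydeg_unit.
Qed.

Lemma Q_ordge n q : q \in powgens (ysS K m) n -> ordge ydeg n q.
Proof.
move=> H; rewrite -[n%:Z]mul1r; apply: (ordge_powgens (@ydeg_add)) H.
exact: ys_ordge.
Qed.

Lemma QQ_ordge n j q : q \in powgens (powgens (ysS K m) n) j -> ordge ydeg (n * j)%N q.
Proof.
move=> H; rewrite PoszM; apply: (ordge_powgens (@ydeg_add)) H.
exact: Q_ordge.
Qed.

Lemma inQ_ordge n f : inIdeal (powgens (ysS K m) n) f -> ordge ydeg n f.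
Proof. by move=> H; apply: (inI_ordge (@ydeg_add)) H => q; apply: Q_ordge. Qed.

Lemma inQQ_ordge n j f : inIdeal (powgens (powgens (ysS K m) n) j) f -> ordge ydeg (n * j)%N f.
Proof. by move=> H; apply: (inI_ordge (@ydeg_add)) H => q; apply: QQ_ordge. Qed.

Definition ycond (j : 'I_m) mu : bool :=
  (0 < mu (lift ord0 j))%N && [forall i : 'I_m, (i < j)%N ==> (mu (lift ord0 i) == 0%N)].

Definition fsp f (j : 'I_m) : Sr := fun mu =>
  if [forall i : 'I_m, (i < j)%N ==> (mu (lift ord0 i) == 0%N)] then f (madd mu (unitm (lift ord0 j))) else 0.

Lemma first_sum (c : K) mu : (exists j, 0 < mu (lift ord0 j))%N ->
  \sum_(j < m) (if ycond j mu then c else 0) = c.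
Proof.
case=> j0 Hj0.
case: (@arg_minnP _ j0 (fun j : 'I_m => (0 < mu (lift ord0 j))%N) (fun j : 'I_m => j : nat) Hj0) => j1 Hj1 Hmin.
rewrite (bigD1 j1) //= big1 ?addr0.
  suff -> : ycond j1 mu by [].
  rewrite /ycond Hj1 /=; apply/forallP => i; apply/implyP => Hi.
  by apply/negPn/negP; rewrite -lt0n => /Hmin; rewrite leqNgt Hi.
move=> j Hj; case: ifP => // /andP[H1 /forallP H2].
exfalso; case: (ltngtP j j1) => [Hlt|Hgt|/val_inj E]; last by rewrite E eqxx in Hj.
  by have := Hmin _ H1; rewrite leqNgt Hlt.
by move/eqP: (implyP (H2 j1) Hgt) Hj1 => ->.
Qed.

Lemma ydeg_pos mu : (0 < ydeg mu)%N -> exists j, (0 < mu (lift ord0 j))%N.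
Proof.
move=> H; suff /existsP [j Hj] : [exists j : 'I_m, (0 < mu (lift ord0 j))%N] by exists j.
apply: contraTT H => /existsPn H.
rewrite -leqNgt leqn0 /ydeg; apply/eqP; rewrite big1 // => i Hi.
case: (unliftP ord0 i) => [j Ej|Ej]; last by rewrite Ej eqxx in Hi.
by move: (H j); rewrite Ej -leqNgt leqn0 => /eqP.
Qed.

Lemma peel (N : nat) f : ordge ydeg N.+1 f ->
  f = \sum_(j < m) @varS K m (lift ord0 j) * fsp f j /\ forall j, ordge ydeg N (fsp f j).
Proof.
move=> Hf; split.
  apply: funext => mu; rewrite sc_sum.
  transitivity (\sum_(j < m) (if ycond j mu then f mu else 0)); last first.
    apply: eq_bigr => j _; rewrite varE mulmonoE mle_unit /fsp /ycond.
    case: (ltnP 0 (mu (lift ord0 j))) => //= Hp.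
    have -> : madd (msub mu (unitm (lift ord0 j))) (unitm (lift ord0 j)) = mu.
      by rewrite maddC msubK // mle_unit.
    suff -> : [forall i : 'I_m, (i < j)%N ==> (msub mu (unitm (lift ord0 j)) (lift ord0 i) == 0%N)]
       = [forall i : 'I_m, (i < j)%N ==> (mu (lift ord0 i) == 0%N)] by [].
    apply: eq_forallb => i; case: (ltnP i j) => //= Hij.
    rewrite ffunE ffunE; suff -> : (lift ord0 i == lift ord0 j) = false by rewrite subn0.
    by rewrite (inj_eq (@lift_inj _ ord0)); apply/negbTE; rewrite neq_ltn Hij.
  case: (posnP (ydeg mu)) => Hy.
    have Hz j : mu (lift ord0 j) = 0%N.
      apply/eqP; move: Hy; rewrite /ydeg (bigD1 (lift ord0 j)) ?neq_lift //= => /eqP.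
      by rewrite addn_eq0 => /andP[].
    rewrite big1; last by move=> j _; rewrite /ycond Hz.
    apply/eqP; apply: contraT => /Hf; rewrite Hy.
    by rewrite lez_nat.
  by rewrite first_sum //; apply: ydeg_pos.
move=> j mu; rewrite /fsp; case: ifP => [_ /Hf|]; last by rewrite eqxx.
by rewrite ydeg_add ydeg_unit addn1.
Qed.

End Ydeg.

Section Decomp.
Variables (K : fieldType) (m : nat).
Local Notation Mn := (Defs.mon m).
Local Notation Sr := (Defs.ser K m).
Implicit Types (f g h p q z : Sr) (mu nu : Mn) (gs G L : seq Sr).

Inductive IW L (P : Sr -> Prop) : Sr -> Prop :=
| IW0 : IW L P 0
| IWc l q g : l \in L -> P q -> IW L P g -> IW L P (l * q + g).

Lemma IW_add L P f g : IW L P f -> IW L P g -> IW L P (f + g).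
Proof.
elim=> [|l q g' Hl Hq _ IH] Hg; first by rewrite add0r.
by rewrite -addrA; apply: IWc => //; apply: IH.
Qed.

Lemma IW_mull L L' P x f : (forall l, l \in L -> x * l \in L') -> IW L P f -> IW L' P (x * f).
Proof.
move=> HL; elim=> [|l q g Hl Hq _ IH]; first by rewrite mulr0; apply: IW0.
by rewrite mulrDr mulrA; apply: IWc => //; apply: HL.
Qed.

Lemma IW_sum L P (I : Type) (r : seq I) (F : I -> Sr) :
  (forall i, IW L P (F i)) -> IW L P (\sum_(i <- r) F i).
Proof.
move=> H; elim: r => [|i r IH]; first by rewrite big_nil; apply: IW0.
by rewrite big_cons; apply: IW_add.
Qed.

Lemma decomp_gen N M f : ordge ydeg (N + M)%N f -> IW (powgens (ysS K m) N) (ordge ydeg M) f.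
Proof.
elim: N f => [|N IH] f Hf.
  by rewrite -[f]addr0 -[f]mul1r; apply: IWc; rewrite ?mem_head //; apply: IW0.
rewrite addSn in Hf; have [Ef Hfs] := peel Hf; rewrite Ef.
apply: IW_sum => j; apply: (IW_mull (L := powgens (ysS K m) N)).
  move=> l Hl; apply: powgensS_mem Hl; apply: map_f; exact: mem_enum.
by apply: IH; apply: Hfs.
Qed.

Lemma decompQ (N : nat) f : ordge ydeg N f -> inIdeal (powgens (ysS K m) N) f.
Proof.
move=> Hf; have : IW (powgens (ysS K m) N) (ordge ydeg 0) f by apply: decomp_gen; rewrite addn0.
elim => [|l q g Hl _ _ IH]; first exact: inI0.
by apply: inID IH; rewrite mulrC; apply: inIM; apply: inI_mem.
Qed.

Lemma decompQQ n j f : ordge ydeg (n * j)%N f -> inIdeal (powgens (powgens (ysS K m) n) j) f.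
Proof.
elim: j f => [|j IH] f.
  by move=> _; rewrite -[f]mulr1; apply: inIM; apply: inI_mem; rewrite mem_head.
rewrite mulnS => /decomp_gen; elim => [|l q g Hl Hq _ IHg]; first exact: inI0.
apply: inID IHg; have := IH _ Hq.
apply: (@inI_ind _ _ _ (fun q => inIdeal (powgens (powgens (ysS K m) n) j.+1) (l * q))).
- by rewrite mulr0; apply: inI0.
- by move=> f1 f2 H1 H2; rewrite mulrDr; apply: inID.
- by move=> h f1 H; rewrite mulrCA; apply: inIM.
- by move=> q1 Hq1; apply: inI_mem; apply: powgensS_mem.
Qed.

End Decomp.

Lemma nat_min (Q : nat -> Prop) : (exists n, Q n) -> exists n, Q n /\ forall k, Q k -> (n <= k)%N.
Proof.
move=> [n Qn]; apply: NNPP => Hno.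
have H : forall j k, (k <= j)%N -> ~ Q k.
  elim=> [|j IH] k Hk Qk; apply: Hno; exists k; split => // k' Qk'; rewrite leqNgt; apply/negP => Hlt.
    by move: Hk Hlt; rewrite leqn0 => /eqP ->.
  by apply: (IH k') => //; rewrite -ltnS (leq_trans Hlt Hk).
exact: (H n n (leqnn n) Qn).
Qed.

Section Lex.
Variable m : nat.
Local Notation Mn := (Defs.mon m).

Fixpoint lexle (s : seq 'I_m.+1) (u v : Mn) : bool :=
  if s is i :: s' then (u i < v i)%N || ((u i == v i) && lexle s' u v) else true.

Lemma lexle_head i s u v : lexle (i :: s) u v -> (u i <= v i)%N.
Proof. by case/orP => [/ltnW //|/andP[/eqP -> _]]. Qed.

Lemma lex_min s (P : Mn -> Prop) : (exists nu, P nu) -> exists lam, P lam /\ forall nu, P nu -> lexle s lam nu.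
Proof.
elim: s P => [|i s IH] P HP.
  by case: HP => nu Pnu; exists nu.
have HQ : exists n, exists nu, P nu /\ nu i = n by case: HP => nu Pnu; exists (nu i), nu.
have [n0 [[nu0 [Pnu0 E0]] Hn0]] := nat_min HQ.
have [lam [[Plam El] Hlam]] := IH (fun nu => P nu /\ nu i = n0) (ex_intro _ nu0 (conj Pnu0 E0)).
exists lam; split => // nu Pnu /=.
have := Hn0 (nu i) (ex_intro _ nu (conj Pnu erefl)); rewrite leq_eqVlt => /orP [/eqP E|H].
  by rewrite El E eqxx /= Hlam ?orbT.
by rewrite El H.
Qed.

Lemma lex_split s u v u' v' : lexle s u u' -> lexle s v v' -> madd u v = madd u' v' ->
  forall i, i \in s -> u i = u' i.
Proof.
move=> H1 H2 E; have Ei j : (u j + v j = u' j + v' j)%N.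
  by have := congr1 (fun w : Mn => w j) E; rewrite !ffunE.
elim: s H1 H2 => [//|i s IH] /= H1 H2 k.
have Hui : u i = u' i.
  case/orP: H1 => [Hlt|/andP[/eqP //]].
  have := lexle_head H2; have := Ei i; lia.
have Hvi : v i = v' i by have := Ei i; rewrite Hui => /addnI.
move: H1 H2; rewrite Hui Hvi !ltnn !eqxx /= => H1 H2.
by rewrite in_cons => /orP [/eqP ->|]; [|apply: IH].
Qed.
End Lex.

Definition wt (a b : nat) m (mu : mon m) : nat := (b * mu ord0 + a * ydeg mu)%N.
Arguments wt a b {m} mu.

Section Lead.
Variables (K : fieldType) (m a b : nat).
Hypothesis Ha : (0 < a)%N.
Local Notation Mn := (Defs.mon m).
Local Notation Sr := (Defs.ser K m).
Implicit Types (f g h p q z : Sr) (mu nu : Mn).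

Lemma wt_add (u v : Mn) : wt a b (madd u v) = (wt a b u + wt a b v)%N.
Proof. rewrite /wt ydeg_add ffunE; lia. Qed.

Lemma lead_contra (Hs F : Sr) (A W : nat) :
  ordge (wt a b) A F ->
  (exists rho, [/\ wt a b rho = A, F rho != 0, rho ord0 = 0%N & (0 < ydeg rho)%N]) ->
  (exists mu, (wt a b mu <= W)%N /\ (Hs * F) mu != 0) ->
  (forall mu, (wt a b mu <= W)%N -> (Hs * F) mu != 0 -> ydeg mu = 0%N) -> False.
Proof.
move=> HF [rho [Wr Fr R0 Ry]] [mu1 [Wm1 Nm1]] Hz.
have HHs : exists n, exists nu, wt a b nu = n /\ Hs nu != 0.
  apply: NNPP => Hn; move: Nm1; suff -> : Hs = 0 by rewrite mul0r sc0 eqxx.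
  apply: funext => nu; apply/eqP; apply: contraT => Hnu; exfalso; apply: Hn.
  by exists (wt a b nu), nu.
have [w [[nu1 [Wn1 Nn1]] Hw]] := nat_min HHs.
have HsO : ordge (wt a b) w Hs by move=> mu Hmu; rewrite lez_nat; apply: Hw; exists mu.
pose s := ord0 :: enum 'I_m.+1.
have [lam [[Wl Nl] Hlam]] := lex_min s (ex_intro (fun nu => wt a b nu = w /\ Hs nu != 0) nu1 (conj Wn1 Nn1)).
have [r0 [[Wr0 Nr0] Hr0]] := lex_min s (ex_intro (fun nu => wt a b nu = A /\ F nu != 0) rho (conj Wr Fr)).
have r0x : r0 ord0 = 0%N.
  by have := lexle_head (Hr0 rho (conj Wr Fr)); rewrite R0 leqn0 => /eqP.
have r0y : (0 < ydeg r0)%N.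
  move: Wr0 Wr; rewrite /wt r0x R0 !muln0 !add0n => E1 E2.
  by move: E1; rewrite -E2 => /eqP; rewrite eqn_pmul2l // => /eqP ->.
pose mu0 := madd lam r0.
have Hcoef : (Hs * F) mu0 = Hs lam * F r0.
  rewrite scM (bigD1_seq lam) ?mem_Lm ?mle_add ?uniq_Lm //= maddK big1_seq ?addr0 //.
  move=> nu /andP[Hne Hin]; apply/eqP; apply: contraT => Hnz.
  have N1 : Hs nu != 0 by apply: contraNneq Hnz => ->; rewrite mul0r.
  have N2 : F (msub mu0 nu) != 0 by apply: contraNneq Hnz => ->; rewrite mulr0.
  have W1 := HsO _ N1; have W2 := HF _ N2.
  move: Hin; rewrite mem_Lm => Hle.
  have E : madd nu (msub mu0 nu) = mu0 by rewrite msubK.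
  have Wsum : (wt a b nu + wt a b (msub mu0 nu) = w + A)%N.
    by rewrite -wt_add E wt_add Wl Wr0.
  rewrite !lez_nat in W1 W2.
  have Wnu : wt a b nu = w by lia.
  have Wrest : wt a b (msub mu0 nu) = A by lia.
  have := lex_split (Hlam nu (conj Wnu N1)) (Hr0 _ (conj Wrest N2)) (esym E).
  move=> Heq; suff Enl : nu = lam by rewrite Enl eqxx in Hne.
  apply/ffunP => i; symmetry; apply: Heq.
  by rewrite /s in_cons mem_enum orbT.
have HFO : ordge (wt a b) (w + A)%N (Hs * F) by rewrite PoszD; apply: ordgeM => //; apply: wt_add.
have W1 := HFO _ Nm1; rewrite lez_nat in W1.
have Nz : (Hs * F) mu0 != 0 by rewrite Hcoef mulf_neq0.
have := Hz mu0; rewrite wt_add Wl Wr0 => /(_ (leq_trans W1 Wm1) Nz).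
rewrite ydeg_add => E; move: r0y; lia.
Qed.
End Lead.

Section Setting.
Variables (K : fieldType) (m a b : nat) (g : ser K m).
Hypotheses (ha : (2 <= a)%N) (hab : (a <= b)%N)
  (g_y : forall mu : mon m, (0 < mu ord0)%N -> g mu = 0)
  (g_b : inIdeal (powgens (ysS K m) b) g)
  (g_nb : ~ inIdeal (powgens (ysS K m) b.+1) g).
Local Notation Mn := (Defs.mon m).
Local Notation Sr := (Defs.ser K m).
Implicit Types (f h p q z : Sr) (mu nu : Mn).
Local Notation x := (xS K m).

Definition xmon (j : nat) : Mn := mscale j (unitm ord0).

Lemma xmon0 j : xmon j ord0 = j.
Proof. by rewrite !ffunE eqxx muln1. Qed.
Lemma ydeg_xmon j : ydeg (xmon j) = 0%N.
Proof. by rewrite /ydeg big1 // => i Hi; rewrite !ffunE (negPf Hi) muln0. Qed.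
Lemma wt_xmon j : wt a b (xmon j) = (b * j)%N.
Proof. by rewrite /wt xmon0 ydeg_xmon muln0 addn0. Qed.

Lemma xX j : x ^+ j = monoS K (xmon j).
Proof. by rewrite /xS varE monoX. Qed.

Lemma ordge_ydeg_wt (N : nat) f : ordge ydeg N f -> ordge (wt a b) (a * N)%N f.
Proof.
move=> H mu /H; rewrite !lez_nat /wt => HN.
by apply: leq_trans (leq_addl _ _); rewrite leq_mul2l HN orbT.
Qed.

Definition Fr : Sr := x ^+ a - g.
Lemma FrE : subS (expS x a) g = Fr. Proof. by rewrite /Fr expE. Qed.

Lemma F_ordge : ordge (wt a b) (a * b)%N Fr.
Proof.
apply: ordgeD; last apply: ordgeN.
  by rewrite xX mulnC -wt_xmon; apply: ordge_mono.
move=> mu Hmu; have Hx : mu ord0 = 0%N.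
  by apply/eqP; rewrite -leqn0 leqNgt; apply/negP => /g_y E; rewrite E eqxx in Hmu.
have := inQ_ordge g_b Hmu; rewrite !lez_nat /wt Hx muln0 add0n leq_mul2l => ->.
by rewrite orbT.
Qed.

Lemma g_rho : exists rho, [/\ g rho != 0, ydeg rho = b & rho ord0 = 0%N].
Proof.
apply: NNPP => Hn; apply: g_nb; apply: decompQ => mu Hmu.
have Hx : mu ord0 = 0%N.
  by apply/eqP; rewrite -leqn0 leqNgt; apply/negP => /g_y E; rewrite E eqxx in Hmu.
have := inQ_ordge g_b Hmu; rewrite !lez_nat leq_eqVlt => /orP [/eqP E|//].
by exfalso; apply: Hn; exists mu; split.
Qed.

Lemma rho_lead : exists rho, [/\ wt a b rho = (a * b)%N, Fr rho != 0, rho ord0 = 0%N & (0 < ydeg rho)%N].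
Proof.
have [rho [Hg Hy Hx]] := g_rho; exists rho; split => //.
- by rewrite /wt Hx Hy muln0.
- rewrite /Fr scB xX /monoS.
  have -> : (rho == xmon a) = false.
    by apply/negbTE/eqP => E; move: Hx; rewrite E xmon0; lia.
  by rewrite sub0r oppr_eq0.
- by rewrite Hy; lia.
Qed.

Lemma partA_only_if k n : (1 <= k)%N -> (1 <= n)%N ->
  inIntClA (subS (expS x a) g) (powgens (ysS K m) n) (expS x k) -> (n <= nk a b k)%N.
Proof.
move=> Hk Hn [d [Hd [cs [Hsz [Hc HE]]]]].
rewrite leqNgt; apply/negP; rewrite /nk ltn_divLR; last by lia.
move=> Hlt.
rewrite FrE in Hc HE.
have Hch : forall i, exists p : Sr * Sr, (i < d)%N ->
    inIdeal (powgens (powgens (ysS K m) n) i.+1) p.1 /\ nth (zeroS K m) cs i = p.1 + p.2 * Fr.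
  move=> i; case: (ltnP i d) => Hi; last by exists (0, 0); lia.
  have [u [h [Hu Eu]]] := inIA_dec (Hc i Hi).
  by exists (u, h).
have [UH HUH] := choice Hch.
have [u0 [h0 [/inI_nil Hu0 E0]]] := inIA_dec HE.
rewrite Hu0 add0r sumE big_map in E0.
have E1 : x ^+ (k * d) + \sum_(i <- iota 0 d) nth (zeroS K m) cs i * x ^+ (k * (d - i.+1)) = h0 * Fr.
  rewrite -E0; congr (addS _ _); first by rewrite !expE exprM.
  by apply: eq_bigr => i _; rewrite !expE exprM.
pose E' : Sr := x ^+ (k * d) + \sum_(i <- iota 0 d) (UH i).1 * x ^+ (k * (d - i.+1)).
have EE : E' = (h0 - \sum_(i <- iota 0 d) (UH i).2 * x ^+ (k * (d - i.+1))) * Fr.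
  rewrite mulrBl -E1 mulr_suml /E'; apply/eqP; rewrite eq_sym subr_eq -addrA -big_split /=.
  apply/eqP; congr (_ + _); rewrite !big_seq; apply: eq_bigr => i; rewrite mem_iota add0n => Hi.
  by have [_ ->] := HUH i Hi; rewrite mulrDl mulrAC.
pose W := (b * (k * d))%N.
have Hsum : forall mu, (wt a b mu <= W)%N -> (\sum_(i <- iota 0 d) (UH i).1 * x ^+ (k * (d - i.+1))) mu = 0.
  move=> mu Hmu; apply/eqP; apply: contraT => Hnz; exfalso.
  have : ordge (wt a b) W.+1 (\sum_(i <- iota 0 d) (UH i).1 * x ^+ (k * (d - i.+1))).
    rewrite big_seq; apply: ordge_sum => i; rewrite mem_iota add0n => Hi.
    have [Hu _] := HUH i Hi.
    have H1 := ordge_ydeg_wt (inQQ_ordge Hu).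
    have H2 : ordge (wt a b) (b * (k * (d - i.+1)))%N (x ^+ (k * (d - i.+1))).
      by rewrite xX -wt_xmon; apply: ordge_mono.
    have := ordgeM (@wt_add m a b (ltnW ha)) H1 H2; apply: ordge_le.
    rewrite -PoszD lez_nat /W.
    have -> : d = (i.+1 + (d - i.+1))%N by lia.
    rewrite addKn; nia.
  by move=> /(_ mu Hnz); rewrite lez_nat; lia.
have HE' : forall mu, (wt a b mu <= W)%N -> E' mu = monoS K (xmon (k * d)) mu.
  by move=> mu Hmu; rewrite /E' scD Hsum // addr0 xX.
apply: (@lead_contra K m a b _ (h0 - \sum_(i <- iota 0 d) (UH i).2 * x ^+ (k * (d - i.+1))) Fr (a * b)%N W); first by lia.
- exact: F_ordge.
- exact: rho_lead.
- exists (xmon (k * d)); rewrite wt_xmon leqnn -EE HE' ?wt_xmon //.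
  by rewrite /monoS eqxx oner_eq0.
- move=> mu Hmu; rewrite -EE HE' // /monoS; case: (mu =P xmon (k * d)) => [->|_].
    by rewrite ydeg_xmon.
  by rewrite eqxx.
Qed.

End Setting.

Section Setting2.
Variables (K : fieldType) (m a b : nat) (g : ser K m).
Hypotheses (ha : (2 <= a)%N) (hab : (a <= b)%N)
  (g_y : forall mu : mon m, (0 < mu ord0)%N -> g mu = 0)
  (g_b : inIdeal (powgens (ysS K m) b) g).
Local Notation Mn := (Defs.mon m).
Local Notation Sr := (Defs.ser K m).
Implicit Types (f h p q z : Sr) (mu nu : Mn).
Local Notation x := (xS K m).

Lemma inIA_of (F : Sr) (gs : seq Sr) u : inIdeal gs u -> inIdealA F gs u.
Proof.
by apply: inI_sub => q Hq; apply: inI_mem; rewrite mem_rcons in_cons Hq orbT.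
Qed.

Lemma inIA_F (F : Sr) (gs : seq Sr) h : inIdealA F gs (h * F).
Proof. by apply: inIM; apply: inI_mem; rewrite mem_rcons mem_head. Qed.

Lemma partA_if k n : (1 <= k)%N -> (1 <= n)%N -> (n <= nk a b k)%N ->
  inIntClA (subS (expS x a) g) (powgens (ysS K m) n) (expS x k).
Proof.
move=> Hk Hn Hnk; rewrite FrE.
pose cs := [seq (if i == a.-1 then - g ^+ k else 0) | i <- iota 0 a].
have Hnth i : (i < a)%N -> nth (zeroS K m) cs i = if i == a.-1 then - g ^+ k else 0.
  by move=> Hi; rewrite (nth_map 0%N) ?size_iota // nth_iota.
exists a; split; first by lia.
exists cs; split; first by rewrite size_map size_iota.
split.
  move=> i Hi; rewrite Hnth //; case: ifP => [/eqP Ei|_]; last exact: inI0.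
  have -> : i.+1 = a by lia.
  apply: inIA_of; apply: decompQQ; apply: ordgeN.
  have := ordgeX (@ydeg_add m) (j:=k) (inQ_ordge g_b); apply: ordge_le.
  rewrite -PoszM lez_nat; move: Hnk; rewrite /nk leq_divRL; lia.
rewrite sumE big_map (bigD1_seq a.-1) ?iota_uniq ?mem_iota /=; last by lia.
rewrite big1_seq; last first.
  move=> i /andP[Hne]; rewrite mem_iota add0n => Hi.
  by rewrite -mulE Hnth // (negPf Hne) mul0r.
rewrite Hnth; last by lia.
rewrite eqxx.
have -> : (a - a.-1.+1 = 0)%N by lia.
rewrite -mulE -addE !expE expr0 mulr1 addr0 -exprM mulnC exprM subrXX.
  rewrite mulrC; exact: inIA_F.
lia.
Qed.

End Setting2.

Section PartB1.
Variables (K : fieldType) (m a b : nat) (g : ser K m).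
Hypotheses (ha : (2 <= a)%N) (hab : (a <= b)%N)
  (g_b : inIdeal (powgens (ysS K m) b) g).
Local Notation Mn := (Defs.mon m).
Local Notation Sr := (Defs.ser K m).
Implicit Types (f h p q z : Sr) (mu nu : Mn).
Local Notation x := (xS K m).

Lemma test_ring (u v : Sr) : (u + v) * (u - v) = u * u - v * v.
Proof. ring. Qed.

Lemma sum_pick (G : nat -> Sr) (j : nat) q : (j < a)%N ->
  \sum_(i < a) G i * (if (i : nat) == j then q else 0) = G j * q.
Proof.
move=> Hj; rewrite (bigD1 (Ordinal Hj)) //= eqxx big1 ?addr0 // => i Hi.
have -> : ((i : nat) == j) = false by apply/negbTE; apply: contra Hi => /eqP E; apply/eqP/val_inj.
by rewrite mulr0.
Qed.

Definition Jsem n (u : Sr) := exists P : nat -> Sr,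
  u = \sum_(i < a) x ^+ i * P i /\ forall i, (i < a)%N -> ordge ydeg (n - nk a b i)%N (P i).

Lemma Jsem_ideal n u : inIdeal (Jgens K m a b n) u -> Jsem n u.
Proof.
apply: inI_ind.
- exists (fun _ => 0); split; first by rewrite big1 // => i _; rewrite mulr0.
  by move=> i _; apply: ordge0.
- move=> f1 f2 [P1 [-> H1]] [P2 [-> H2]]; exists (fun i => P1 i + P2 i); split.
    by rewrite -big_split; apply: eq_bigr => i _; rewrite mulrDr.
  by move=> i Hi; apply: ordgeD; [apply: H1|apply: H2].
- move=> h f1 [P1 [-> H1]]; exists (fun i => h * P1 i); split.
    by rewrite mulr_sumr; apply: eq_bigr => i _; rewrite mulrCA.
  move=> i Hi; rewrite -[X in ordge _ X]add0r; apply: ordgeM; first exact: ydeg_add.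
    by apply: ordge_triv.
  exact: H1.
- move=> q; rewrite mem_cat => /orP [Hq|].
    exists (fun i => if i == 0%N then q else 0); split.
      by rewrite sum_pick ?expr0 ?mul1r //; lia.
    move=> i Hi; case: eqP => [->|_]; last exact: ordge0.
    by rewrite /nk mul0n div0n subn0; apply: Q_ordge.
  case/flatten_mapP => i; rewrite mem_iota => /andP [Hi1 Hi2] /mapP [q' Hq' ->].
  exists (fun j => if j == i then q' else 0); split.
    by rewrite sum_pick ?expE //; lia.
  move=> j Hj; case: eqP => [->|_]; last exact: ordge0.
  exact: Q_ordge.
Qed.

End PartB1.

Section PartB2.
Variables (K : fieldType) (m a b : nat) (g : ser K m).
Hypotheses (ha : (2 <= a)%N) (hab : (a <= b)%N)
  (g_b : inIdeal (powgens (ysS K m) b) g).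
Local Notation Mn := (Defs.mon m).
Local Notation Sr := (Defs.ser K m).
Local Notation x := (xS K m).
Variables (n : nat) (P : nat -> Sr) (h f : Sr).
Hypothesis HP : forall i, (i < a)%N -> ordge ydeg (n - nk a b i)%N (P i).
Hypothesis Hf : f = \sum_(i < a) x ^+ i * P i + h * Fr a g.

Definition Mx : 'M[Sr]_a := \matrix_(l, u) \sum_(i < a)
  ((((i + l)%N == u) : nat)%:R * P i + (((i + l)%N == (u + a)%N) : nat)%:R * (g * P i)).
Definition ev : 'cV[Sr]_a := \col_l x ^+ l.
Definition wv : 'cV[Sr]_a := \col_l (h * x ^+ l +
   \sum_(i < a) (((a <= i + l)%N : nat)%:R * (x ^+ (i + l - a) * P i))).

Lemma sum_delta (k : nat) (G : nat -> Sr) :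
  \sum_(u < a) (((k == u) : nat)%:R * G u) = ((k < a)%N : nat)%:R * G k.
Proof.
case: (ltnP k a) => Hk.
  rewrite (bigD1 (Ordinal Hk)) //= eqxx mul1r big1 ?addr0 ?mul1r // => u Hu.
  have -> : (k == u) = false by apply/negbTE; apply: contra Hu => /eqP E; apply/eqP/val_inj.
  by rewrite mul0r.
rewrite mul0r big1 // => u _; have -> : (k == u) = false by apply/negbTE; have := ltn_ord u; lia.
by rewrite mul0r.
Qed.

Lemma Mrow (l : 'I_a) : \sum_(u < a) Mx l u * x ^+ u =
  \sum_(i < a) (((i + l < a)%N : nat)%:R * (P i * x ^+ (i + l)) +
                ((a <= i + l)%N : nat)%:R * (g * P i * x ^+ (i + l - a))).
Proof.
rewrite (eq_bigr (fun u : 'I_a => \sum_(i < a) ((((i + l)%N == u) : nat)%:R * (P i * x ^+ u) +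
   (((i + l)%N == (u + a)%N) : nat)%:R * (g * P i * x ^+ u)))); last first.
  by move=> u _; rewrite mxE mulr_suml; apply: eq_bigr => i _; rewrite mulrDl !mulrA.
rewrite exchange_big; apply: eq_bigr => i _; rewrite big_split /=.
congr (_ + _).
  by rewrite (sum_delta (i + l) (fun u => P i * x ^+ u)).
have E u : ((i + l)%N == (u + a)%N) = ((i + l - a)%N == u) && (a <= i + l)%N.
  by apply/eqP/andP => [E|[/eqP E H]]; lia.
case: (leqP a (i + l)) => Hil.
  rewrite (eq_bigr (fun u : 'I_a => (((i + l - a)%N == u) : nat)%:R * (g * P i * x ^+ u))); last first.
    by move=> u _; rewrite E Hil andbT.
  rewrite (sum_delta (i + l - a) (fun u => g * P i * x ^+ u)).
  have -> : (i + l - a < a)%N by have := ltn_ord i; have := ltn_ord l; lia.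
  by [].
have Hf' : (a <= i + l)%N = false by lia.
rewrite /= mulr0n mul0r big1 // => u _; by rewrite E Hf' andbF /= mulr0n mul0r.
Qed.

Lemma Meq : (f%:M - Mx) *m ev = Fr a g *: wv.
Proof.
rewrite mulmxBl mul_scalar_mx; apply/matrixP => l j; rewrite (ord1 j) !mxE.
under eq_bigr => u _ do rewrite [ev u 0]mxE.
have HS : \sum_(i < a) (x ^+ i * P i * x ^+ l) -
   \sum_(i < a) (((i + l < a)%N : nat)%:R * (P i * x ^+ (i + l)) +
                ((a <= i + l)%N : nat)%:R * (g * P i * x ^+ (i + l - a)))
  = Fr a g * \sum_(i < a) (((a <= i + l)%N : nat)%:R * (x ^+ (i + l - a) * P i)).
  rewrite -sumrB mulr_sumr; apply: eq_bigr => i _; case: (leqP a (i + l)) => Hil.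
    rewrite /= mulr0n mulr1n mul0r add0r !mul1r.
    have -> : x ^+ i * P i * x ^+ l = P i * x ^+ (i + l - a) * x ^+ a.
      by rewrite -[in RHS]mulrA -exprD subnK // exprD; ring.
    rewrite /Fr; ring.
  rewrite /= mulr0n mulr1n mul0r addr0 !mul1r mul0r mulr0 exprD; ring.
rewrite Mrow Hf mulrDl mulr_suml [in RHS]mulrDr -HS; ring.
Qed.

End PartB2.

Section PartB3.
Variables (K : fieldType) (m a b : nat) (g : ser K m).
Hypotheses (ha : (2 <= a)%N) (hab : (a <= b)%N)
  (g_b : inIdeal (powgens (ysS K m) b) g).
Local Notation Mn := (Defs.mon m).
Local Notation Sr := (Defs.ser K m).
Local Notation x := (xS K m).
Variables (n : nat) (P : nat -> Sr) (h f : Sr).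
Hypothesis HP : forall i, (i < a)%N -> ordge ydeg (n - nk a b i)%N (P i).
Hypothesis Hf : f = \sum_(i < a) x ^+ i * P i + h * Fr a g.

Local Notation M := (Mx a g P).

Lemma detF : exists c, \det (f%:M - M) = c * Fr a g.
Proof.
have Ha : (0 < a)%N by lia.
pose A := f%:M - M.
have E : (\det A)%:M *m ev K m a = Fr a g *: (\adj A *m wv a P h).
  by rewrite -mul_adj_mx -mulmxA (Meq ha hab Hf) scalemxAr.
exists ((\adj A *m wv a P h) (Ordinal Ha) 0).
have := congr1 (fun B : 'cV[Sr]_a => B (Ordinal Ha) 0) E.
by rewrite mul_scalar_mx !mxE /= expr0 mulr1 mulrC.
Qed.

Lemma char_eval_gen (B : 'M[Sr]_a) (y : Sr) : (char_poly B).[y] = \det (y%:M - B).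
Proof.
rewrite /char_poly -horner_evalE -det_map_mx; congr (\det _); apply/matrixP => i j.
rewrite !mxE; rewrite /= /horner_eval.
by rewrite hornerD hornerN hornerMn hornerX hornerC.
Qed.

End PartB3.

Section Good.
Variables (K : fieldType) (m a b : nat) (g : ser K m).
Hypotheses (ha : (2 <= a)%N) (hab : (a <= b)%N)
  (g_b : inIdeal (powgens (ysS K m) b) g).
Local Notation Mn := (Defs.mon m).
Local Notation Sr := (Defs.ser K m).
Local Notation x := (xS K m).
Variables (n : nat) (P : nat -> Sr).
Hypothesis HP : forall i, (i < a)%N -> ordge ydeg (n - nk a b i)%N (P i).

Local Notation M := (Mx a g P).

Definition aydeg (mu : Mn) : nat := (a * ydeg mu)%N.
Lemma aydeg_add (u v : Mn) : aydeg (madd u v) = (aydeg u + aydeg v)%N.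
Proof. by rewrite /aydeg ydeg_add mulnDr. Qed.

Lemma ordge_ya (N : nat) (q : Sr) : ordge ydeg N q -> ordge aydeg (a * N)%N q.
Proof. by move=> H mu /H; rewrite !lez_nat /aydeg leq_mul2l => ->; rewrite orbT. Qed.

Lemma ordge_ay (N : nat) (q : Sr) : ordge aydeg (a * N)%N q -> ordge ydeg N q.
Proof. by move=> H mu /H; rewrite !lez_nat /aydeg leq_mul2l; have -> : (a == 0%N) = false by lia. Qed.

Definition cc : int := (a * n)%N.
Definition Good (p : {poly Sr}) (L : int) := forall k : nat, ordge aydeg (L - k%:Z * cc) p`_k.

Lemma Good_le p L L' : L' <= L -> Good p L -> Good p L'.
Proof. by move=> HL Hp k; apply: ordge_le (Hp k); rewrite lerD2r. Qed.

Lemma Good_add p q L : Good p L -> Good q L -> Good (p + q) L.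
Proof. by move=> Hp Hq k; rewrite coefD; apply: ordgeD. Qed.

Lemma Good_opp p L : Good p L -> Good (- p) L.
Proof. by move=> Hp k; rewrite coefN; apply: ordgeN. Qed.

Lemma Good0 L : Good 0 L.
Proof. by move=> k; rewrite coef0; apply: ordge0. Qed.

Lemma Good_sum (I : Type) (r : seq I) (Pr : pred I) (F : I -> {poly Sr}) L :
  (forall i, Pr i -> Good (F i) L) -> Good (\sum_(i <- r | Pr i) F i) L.
Proof.
move=> H; apply: (big_ind (fun p => Good p L)) => //; first exact: Good0.
by move=> p q Hp Hq; apply: Good_add Hp Hq.
Qed.

Lemma Good_mul p q L1 L2 : Good p L1 -> Good q L2 -> Good (p * q) (L1 + L2).
Proof.
move=> Hp Hq k; rewrite coefM; apply: ordge_sum => j _.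
have := ordgeM aydeg_add (Hp j) (Hq (k - j)%N); apply: ordge_le.
have Hj : (j <= k)%N by have := ltn_ord j; lia.
by rewrite -subzn // le_eqVlt; apply/orP; left; apply/eqP; ring.
Qed.

Lemma Good1 : Good 1 0.
Proof.
move=> k; rewrite coef1; case: (k =P 0%N) => [->|_]; last by rewrite mulr0n; apply: ordge0.
by apply: ordge_triv; rewrite mul0r subr0.
Qed.

Lemma Good_prod (I : Type) (r : seq I) (F : I -> {poly Sr}) (Lv : I -> int) :
  (forall i, Good (F i) (Lv i)) -> Good (\prod_(i <- r) F i) (\sum_(i <- r) Lv i).
Proof.
move=> H; elim: r => [|i r IH]; first by rewrite !big_nil; apply: Good1.
by rewrite !big_cons; apply: Good_mul.
Qed.

Definition Lam (i j : nat) : int := cc + (i%:Z - j%:Z) * b%:Z.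

Lemma g_ay : ordge aydeg (a * b)%N g.
Proof. exact: ordge_ya (inQ_ordge g_b). Qed.

Lemma M_entry (i j : 'I_a) : ordge aydeg (Lam i j) (M i j).
Proof.
rewrite mxE; apply: ordge_sum => i' _.
have Hi' := ltn_ord i'; have Hi := ltn_ord i; have Hj := ltn_ord j.
have Hnk : (nk a b i' * a <= i' * b)%N by rewrite /nk leq_trunc_div.
have HPi := ordge_ya (HP Hi').
apply: ordgeD.
  case: eqP => E; last by rewrite mul0r; apply: ordge0.
  rewrite mul1r; apply: ordge_le HPi; rewrite /Lam /cc; nia.
case: eqP => E; last by rewrite mul0r; apply: ordge0.
rewrite mul1r; have := ordgeM aydeg_add g_ay HPi; apply: ordge_le.
rewrite /Lam /cc; nia.
Qed.

Section Gen.
Variable B : 'M[Sr]_a.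
Hypothesis HB : forall i j : 'I_a, ordge aydeg (Lam i j) (B i j).
Lemma cpmx_Good (i j : 'I_a) : Good ((char_poly_mx B) i j) (Lam i j).
Proof.
move=> k; rewrite !mxE coefB coefMn coefX coefC; apply: ordgeD; last apply: ordgeN.
  case: (i =P j) => [Eij|_]; last by rewrite mulr0n; apply: ordge0.
  case: (k =P 1%N) => [->|_]; last by rewrite mul0rn; apply: ordge0.
  by apply: ordge_triv; rewrite /Lam Eij; lia.
case: (k =P 0%N) => [->|_]; last exact: ordge0.
by rewrite mul0r subr0; apply: HB.
Qed.

Lemma Lam_sum (s : 'S_a) : \sum_(i < a) Lam i (s i) = a%:Z * cc.
Proof.
rewrite (eq_bigr (fun i : 'I_a => cc + ((i : nat)%:Z * b%:Z - (s i : nat)%:Z * b%:Z))); last first.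
  by move=> i _; rewrite /Lam mulrBl.
rewrite big_split sumrB /= sumr_const card_ord.
have -> : \sum_(i < a) ((s i : nat)%:Z * b%:Z) = \sum_(i < a) ((i : nat)%:Z * b%:Z).
  by rewrite [RHS](reindex_inj (@perm_inj _ s)).
by rewrite subrr addr0 -mulr_natl natz.
Qed.

Lemma char_Good_gen : Good (char_poly B) (a%:Z * cc).
Proof.
rewrite /char_poly /determinant; apply: Good_sum => s _.
have H := Good_prod (r := index_enum 'I_a) (fun i => @cpmx_Good i (s i)).
rewrite Lam_sum in H.
case: (odd_perm s); rewrite ?expr1 ?expr0 ?mulN1r ?mul1r //; exact: Good_opp.
Qed.
End Gen.

Lemma char_Good : Good (char_poly M) (a%:Z * cc).
Proof. by apply: char_Good_gen; apply: M_entry. Qed.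

Lemma char_coef (j : nat) : (j < a)%N ->
  inIdeal (powgens (powgens (ysS K m) n) j.+1) (char_poly M)`_(a - j.+1).
Proof.
move=> Hj; apply: decompQQ; apply: ordge_ay.
have := char_Good (k := (a - j.+1)%N); apply: ordge_le.
rewrite /cc; nia.
Qed.

End Good.

Section Final.
Variables (K : fieldType) (m a b : nat) (g : ser K m).
Hypotheses (ha : (2 <= a)%N) (hab : (a <= b)%N)
  (g_b : inIdeal (powgens (ysS K m) b) g).
Local Notation Mn := (Defs.mon m).
Local Notation Sr := (Defs.ser K m).
Local Notation x := (xS K m).

Lemma sum_iota_rev (G : nat -> Sr) :
  \sum_(i <- iota 0 a) G (a - i.+1)%N = \sum_(k < a) G k.
Proof.
have -> : iota 0 a = index_iota 0 a by rewrite /index_iota subn0.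
rewrite big_mkord (reindex_inj rev_ord_inj) /=; apply: eq_bigr => i _.
by rewrite subnSK // subKn // ltnW.
Qed.

Lemma partB1 n f : inIdealA (subS (expS x a) g) (powgens (ysS K m) n) f ->
  inIdealA (subS (expS x a) g) (Jgens K m a b n) f.
Proof.
apply: inI_sub => q; rewrite !mem_rcons !in_cons => /orP [/eqP ->|Hq].
  by apply: inI_mem; rewrite mem_rcons mem_head.
by apply: inI_mem; rewrite mem_rcons in_cons mem_cat Hq orbT.
Qed.

Lemma partB2 n f : inIdealA (subS (expS x a) g) (Jgens K m a b n) f ->
  inIntClA (subS (expS x a) g) (powgens (ysS K m) n) f.
Proof.
rewrite FrE => /inIA_dec [u [h [Hu Ef]]].
have [P [Eu HP]] := Jsem_ideal ha hab Hu.
rewrite Eu in Ef.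
pose p := char_poly (Mx a g P).
pose cs := [seq p`_(a - i.+1) | i <- iota 0 a].
have Hnth i : (i < a)%N -> nth (zeroS K m) cs i = p`_(a - i.+1).
  by move=> Hi; rewrite (nth_map 0%N) ?size_iota // nth_iota.
exists a; split; first by lia.
exists cs; split; first by rewrite size_map size_iota.
split.
  move=> i Hi; rewrite Hnth //; apply: inIA_of; exact: (char_coef ha hab g_b HP).
have [c Ec] := detF ha hab Ef.
have Ee : addS (expS f a) (sumS [seq mulS (nth (zeroS K m) cs i) (expS f (a - i.+1)) | i <- iota 0 a])
   = p.[f].
  rewrite horner_coef size_char_poly big_ord_recr /= -addE addrC.
  have Hm : p`_a = 1.
    have := char_poly_monic (Mx a g P); rewrite monicE lead_coefE size_char_poly /= => /eqP.
    by [].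
  rewrite /p Hm mul1r expE; congr (_ + _).
  rewrite sumE big_map big_seq_cond.
  rewrite (eq_bigr (fun i => p`_(a - i.+1) * f ^+ (a - i.+1))); last first.
    by move=> i; rewrite andbT mem_iota add0n => Hi; rewrite -mulE Hnth // expE.
  rewrite -big_seq_cond (sum_iota_rev (fun k => p`_k * f ^+ k)).
  by [].
rewrite Ee /p char_eval_gen Ec; exact: inIA_F.
Qed.

End Final.


Unset Implicit Arguments.
Theorem proposition5p2 (K : closedFieldType) (m a b : nat) (g : ser K m)
  (hm : (1 <= m)%N) (ha : (2 <= a)%N) (hab : (a <= b)%N)
  (g_y : forall mu : mon m, (0 < mu ord0)%N -> g mu = 0)
  (g_b : inIdeal (powgens (ysS K m) b) g)
  (g_nb : ~ inIdeal (powgens (ysS K m) b.+1) g) :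
  let F := subS (expS (xS K m) a) g in
  (forall k n : nat, (1 <= k)%N -> (1 <= n)%N ->
     (inIntClA F (powgens (ysS K m) n) (expS (xS K m) k) <-> (n <= nk a b k)%N)) /\
  (forall n : nat, (1 <= n)%N ->
     (forall f, inIdealA F (powgens (ysS K m) n) f -> inIdealA F (Jgens K m a b n) f) /\
     (forall f, inIdealA F (Jgens K m a b n) f -> inIntClA F (powgens (ysS K m) n) f)).
Proof.
move=> F; split.
  move=> k n Hk Hn; split.
    exact: (partA_only_if ha hab g_y g_b g_nb Hk Hn).
  exact: (partA_if ha hab g_b Hk Hn).
move=> n Hn; split.
  by move=> f; apply: (partB1 b).
exact: (partB2 ha hab g_b).
Qed.
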